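(* Let $G$ be labeled by an $\mathcal{AL}$ labeling $\langle r,d_1,d_2\rangle$, and let $x$ be a black node that belongs to class $A$ or $B$. Then $\mathit{A\_or\_B}(x)$ returns ``$B$'' if $x$ is in class $B$, and returns ``$A$'' otherwise. The robot is in $x$ when $\mathit{A\_or\_B}(x)$ exits. In the call $\mathit{A\_or\_B}(x)$ the robot needs $O(d_1\log\Delta)$ bits of memory, and the total number of edge traversals is $O(\Delta^{2d_1-1})$.
   Context: $G$ is an undirected connected anonymous graph (loops and multiple edges allowed) of maximum degree $\Delta$ and diameter $D$, with ports $0,\dots,\mathtt{deg}(v)-1$ at each node $v$; the robot sees the degree, the color of the current node and the entry port and moves by choosing exit ports. $\mathcal{AL}$ labeling $\langle r,d_1,d_2\rangle$: root $r$; $d(\cdot,\cdot)$ graph distance; integers $d_1\ge 2$, $d_2$ with $\lfloor d_2/2\rfloor\ge d_1$; $q=d_1+d_2+2$; classes $C=\{v:d(r,v)\bmod q=0\}$, $D=\{v:d(r,v)\bmod q=1\}$, $A=\{v:d(r,v)\bmod q=d_2+1\}$, $B=\{v:d(r,v)\bmod q=d_1+d_2+1\}$; nodes of $A\cup B\cup C\cup D$ are black, others white; it is assumed $D\ge d_1+d_2+1$. The white radius $R_W(v)$ of a node $v$ is $\ell-1$, where $\ell$ is the distance from $v$ to a nearest black node. White local search from $u$ within radius $\ell$: the recursive procedure $\mathit{WLS}(v,k,\mathit{inport})$, called as $\mathit{WLS}(u,\ell,-1)$: if $k=0$ report $v$; otherwise, if $v$ is black and $k\ne\ell$, return; otherwise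 for each port $\mathit{outport}\neq\mathit{inport}$ of $v$ in increasing order, move through it to neighbor $w$, call $\mathit{WLS}(w,k-1,\text{entry port at }w)$, and move back to $v$. Procedure $\mathit{A\_or\_B}(x)$: perform a white local search from $x$ within radius $d_1$; return ``$A$'' if some reported white node has white radius $d_1-1$, and ``$B$'' otherwise. The robot ends at $x$. *)

(* Defs.v *)
From mathcomp Require Import all_boot.

Set Implicit Arguments.
Unset Strict Implicit.
Unset Printing Implicit Defensive.

(* Node v has ports
   0, ..., deg v - 1.  Leaving v through port p < deg v leads to node
   [nbr v p], entering it through port [ent v p].  Loops and multiple
   edges are allowed.  (Values of nbr/ent at p >= deg v are irrelevant.) *)
Definition port_graph (V : finType) (deg : V -> nat) (nbr : V -> nat -> V)
  (ent : V -> nat -> nat) : Prop :=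
  forall v p, p < deg v ->
    [/\ ent v p < deg (nbr v p),
        nbr (nbr v p) (ent v p) = v &
        ent (nbr v p) (ent v p) = p].

Definition adj (V : finType) (deg : V -> nat) (nbr : V -> nat -> V) : rel V :=
  fun u w => [exists p : 'I_(deg u), nbr u p == w].

Fixpoint ball (V : finType) (deg : V -> nat) (nbr : V -> nat -> V)
  (k : nat) (u : V) : {set V} :=
  match k with
  | 0 => [set u]
  | k'.+1 => let B := ball deg nbr k' u in
             B :|: [set w | [exists v in B, adj deg nbr v w]]
  end.

(* graph distance (for a connected graph, every node lies in
   ball (#|V|-1) u, so this is the least k with v in ball k u) *)
Definition dist (V : finType) (deg : V -> nat) (nbr : V -> nat -> V)
  (u v : V) : nat :=
  find (fun k => v \in ball deg nbr k u) (iota 0 #|V|).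

Definition connected (V : finType) (deg : V -> nat) (nbr : V -> nat -> V) : Prop :=
  forall u v : V, connect (adj deg nbr) u v.

Definition maxdeg (V : finType) (deg : V -> nat) : nat := \max_(v : V) deg v.
Definition diam (V : finType) (deg : V -> nat) (nbr : V -> nat -> V) : nat :=
  \max_(u : V) \max_(v : V) dist deg nbr u v.

Definition ALq (d1 d2 : nat) : nat := d1 + d2 + 2.

Definition inC (V : finType) (deg : V -> nat) (nbr : V -> nat -> V)
  (r : V) (d1 d2 : nat) (v : V) : bool :=
  dist deg nbr r v %% ALq d1 d2 == 0.
Definition inD (V : finType) (deg : V -> nat) (nbr : V -> nat -> V)
  (r : V) (d1 d2 : nat) (v : V) : bool :=
  dist deg nbr r v %% ALq d1 d2 == 1.
Definition inA (V : finType) (deg : V -> nat) (nbr : V -> nat -> V)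
  (r : V) (d1 d2 : nat) (v : V) : bool :=
  dist deg nbr r v %% ALq d1 d2 == d2 + 1.
Definition inB (V : finType) (deg : V -> nat) (nbr : V -> nat -> V)
  (r : V) (d1 d2 : nat) (v : V) : bool :=
  dist deg nbr r v %% ALq d1 d2 == d1 + d2 + 1.

Definition AL_black (V : finType) (deg : V -> nat) (nbr : V -> nat -> V)
  (r : V) (d1 d2 : nat) (v : V) : bool :=
  [|| inA deg nbr r d1 d2 v, inB deg nbr r d1 d2 v,
      inC deg nbr r d1 d2 v | inD deg nbr r d1 d2 v].

(* At each step the robot observes the degree, the colour
   of the current node and the entry port (None before its first move),
   and either moves through a chosen port or stops with an output.
   Its memory is a state whose contents are encoded as a list of
   natural-number registers; the memory size in bits is the total
   binary length of the registers. *)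
Record obs := Obs { odeg : nat; ocol : bool; oentry : option nat }.

Inductive act (S O : Type) := AMove of nat & S | AStop of O.
Arguments AMove {S O}.
Arguments AStop {S O}.

Record robot (O : Type) := Robot {
  rstate : Type;
  rinit : rstate;
  rstep : rstate -> obs -> act rstate O;
  renc : rstate -> seq nat }.

(* number of bits of n in binary (0 takes one bit) *)
Definition bitlen (n : nat) : nat := (trunc_log 2 n).+1.

Definition rbits O (R : robot O) (s : rstate R) : nat :=
  sumn (map bitlen (renc s)).

(* Returns Some (output, final node, number of edge traversals,
   maximal memory in bits over all states used) if the robot stops
   within the fuel, None otherwise (or on an invalid port). *)
Fixpoint exec (V : finType) (deg : V -> nat) (nbr : V -> nat -> V)
  (ent : V -> nat -> nat) (col : V -> bool) O (R : robot O)
  (fuel : nat) (v : V) (e : option nat) (s : rstate R)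
  : option (O * V * nat * nat) :=
  match fuel with
  | 0 => None
  | fuel'.+1 =>
    match rstep s (Obs (deg v) (col v) e) with
    | AStop o => Some (o, v, 0, rbits s)
    | AMove p s' =>
      if p < deg v then
        match @exec V deg nbr ent col O R fuel' (nbr v p) (Some (ent v p)) s' with
        | Some (o, y, m, b) => Some (o, y, m.+1, maxn (rbits s) b)
        | None => None
        end
      else None
    end
  end.

(* Outer part: white local search WLS(x, d1, -1), implemented as a
   depth-first traversal whose stack [ab_ost] stores the entry ports of
   the nodes on the current path (most recent first).  When returning
   to a node, the observed entry port is the outport just explored.
   At each reported node w (depth d1), if w is white and no suitable
   node has been found yet, the robot tests whether w has white radius
   d1-1 by an inner depth-first search of depth d1-1 from w (stack
   [ab_ist]) looking for black nodes; w has white radius d1-1 iff no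
   black node is found (w is within distance d1 of the black node x).
   Modes: 0 outer-arrive, 1 outer-return, 2 inner-arrive, 3 inner-return. *)
Inductive cls := ClsA | ClsB.

Record ABst := ABSt {
  ab_mode : nat; ab_found : bool; ab_blk : bool;
  ab_ost : seq nat; ab_ist : seq nat }.

Definition ab_enc (s : ABst) : seq nat :=
  [:: ab_mode s; nat_of_bool (ab_found s); nat_of_bool (ab_blk s);
      size (ab_ost s)] ++ ab_ost s ++ ab_ist s.

Definition first_out (from : nat) (excl : option nat) (d : nat) : option nat :=
  let p := if excl == Some from then from.+1 else from in
  if p < d then Some p else None.

Definition set_mode m s := ABSt m (ab_found s) (ab_blk s) (ab_ost s) (ab_ist s).

(* return to the parent in the outer search, or stop at x *)
Definition outer_return (s : ABst) : act ABst cls :=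
  match ab_ost s with
  | p :: rest => AMove p (ABSt 1 (ab_found s) (ab_blk s) rest (ab_ist s))
  | [::] => AStop (if ab_found s then ClsA else ClsB)
  end.

Definition outer_iter (d : nat) (s : ABst) (from : nat) : act ABst cls :=
  match first_out from (ohead (ab_ost s)) d with
  | Some p => AMove p (set_mode 0 s)
  | None => outer_return s
  end.

Definition inner_return (s : ABst) : act ABst cls :=
  match ab_ist s with
  | p :: rest => AMove p (ABSt 3 (ab_found s) (ab_blk s) (ab_ost s) rest)
  | [::] => outer_return s (* not reached *)
  end.

Definition inner_iter (d : nat) (s : ABst) (from : nat) : act ABst cls :=
  match first_out from (ohead (ab_ist s)) d with
  | Some p => AMove p (set_mode 2 s)
  | None =>
    match ab_ist s with
    | [::] => (* inner search finished, back at w *)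
      outer_return (ABSt 1 (ab_found s || ~~ ab_blk s) (ab_blk s)
                          (ab_ost s) (ab_ist s))
    | _ => inner_return s
    end
  end.

Definition ab_step (d1 : nat) (s : ABst) (o : obs) : act ABst cls :=
  let d := odeg o in
  let c := ocol o in
  let e := oentry o in
  match ab_mode s with
  | 0 =>
    let s1 := match e with
              | Some p => ABSt 0 (ab_found s) (ab_blk s) (p :: ab_ost s) (ab_ist s)
              | None => s end in
    let dep := size (ab_ost s1) in
    if dep == d1 then
      if ~~ c && ~~ ab_found s1
      then inner_iter d (ABSt 3 (ab_found s1) false (ab_ost s1) [::]) 0
      else outer_return s1
    else if (dep != 0) && c then outer_return s1
    else outer_iter d s1 0
  | 1 => outer_iter d s (match e with Some q => q.+1 | None => 0 end)
  | 2 =>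
    let s1 := match e with
              | Some p => ABSt 2 (ab_found s) (ab_blk s) (ab_ost s) (p :: ab_ist s)
              | None => s end in
    if c then inner_return (ABSt 2 (ab_found s1) true (ab_ost s1) (ab_ist s1))
    else if size (ab_ist s1) == d1.-1 then inner_return s1
    else inner_iter d s1 0
  | _ => inner_iter d s (match e with Some q => q.+1 | None => 0 end)
  end.

Definition AorB_robot (d1 : nat) : robot cls :=
  @Robot cls ABst (ABSt 0 false false [::] [::]) (ab_step d1) ab_enc.
Arguments exec {V} deg nbr ent col {O} R fuel v e s.

(* Main.v *)
Require Import Defs.
From mathcomp Require Import all_boot zify.
Set Implicit Arguments.
Unset Strict Implicit.
Unset Printing Implicit Defensive.

Section Exec.
Variables (V : finType) (deg : V -> nat) (nbr : V -> nat -> V) (ent : V -> nat -> nat).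
Hypothesis PG : port_graph deg nbr ent.
Variables (col : V -> bool) (d1 Dl : nat).
Hypothesis Hd1 : 2 <= d1.
Hypothesis Hdeg : forall v, deg v <= Dl.

Definition ob v e := Obs (deg v) (col v) e.
Definition Bnd := 5 + d1 + d1 * bitlen Dl + d1 * bitlen Dl.
Definition good (s : ABst) :=
  [&& ab_mode s <= 3, size (ab_ost s) <= d1, all (fun p => p < Dl) (ab_ost s),
      size (ab_ist s) <= d1 & all (fun p => p < Dl) (ab_ist s)].

Lemma bitlen_mono m n : m <= n -> bitlen m <= bitlen n.
Proof. by move=> h; rewrite /bitlen ltnS leq_trunc_log. Qed.

Lemma bitlen_le n : bitlen n <= n.+1.
Proof.
rewrite /bitlen ltnS; case: n => [|n]; first by rewrite trunc_log0.
have h := trunc_logP (p:=2) (n:=n.+1) erefl erefl.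
apply: leq_trans h; set t := trunc_log _ _.
elim: t => // t ih; rewrite expnS; lia.
Qed.

Lemma sum_bits s : all (fun p => p < Dl) s -> sumn (map bitlen s) <= size s * bitlen Dl.
Proof.
elim: s => //= a s ih /andP [ha hs].
have := bitlen_mono (ltnW ha); have := ih hs; lia.
Qed.

Lemma bitlen_bool (b : bool) : bitlen b = 1.
Proof. by case: b. Qed.

Lemma good_bits s : good s -> rbits (R := AorB_robot d1) s <= Bnd.
Proof.
case: s => md f b o i /and5P /= [hm ho hoa hi hia].
rewrite /rbits /= /ab_enc /= map_cat sumn_cat !bitlen_bool.
have h1 := sum_bits hoa; have h2 := sum_bits hia.
have h3 : bitlen md <= 2 by apply: (leq_trans (bitlen_mono hm)).
have h4 : bitlen (size o) <= d1.+1 by apply: leq_trans (bitlen_mono ho) (bitlen_le _).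
have h5 : size o * bitlen Dl <= d1 * bitlen Dl by rewrite leq_mul2r ho orbT.
have h6 : size i * bitlen Dl <= d1 * bitlen Dl by rewrite leq_mul2r hi orbT.
rewrite /Bnd /=; lia.
Qed.

Definition step := ab_step d1.

Inductive reach : V -> option nat -> ABst -> V -> option nat -> ABst -> nat -> Prop :=
| R0 v e s : good s -> reach v e s v e s 0
| RS v e s p s' v2 e2 s2 m :
    step s (ob v e) = AMove p s' -> p < deg v -> good s ->
    reach (nbr v p) (Some (ent v p)) s' v2 e2 s2 m -> reach v e s v2 e2 s2 m.+1.

Lemma reach_trans v1 e1 s1 v2 e2 s2 v3 e3 s3 m1 m2 :
  reach v1 e1 s1 v2 e2 s2 m1 -> reach v2 e2 s2 v3 e3 s3 m2 ->
  reach v1 e1 s1 v3 e3 s3 (m1 + m2).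
Proof.
elim=> //= v e s p s' v' e' s'' m h1 h2 h3 _ ih h4.
by apply: RS h1 h2 h3 (ih h4).
Qed.

Lemma reach_good v1 e1 s1 v2 e2 s2 m : reach v1 e1 s1 v2 e2 s2 m -> good s1.
Proof. by case. Qed.

Lemma reach_good2 v1 e1 s1 v2 e2 s2 m : reach v1 e1 s1 v2 e2 s2 m -> good s2.
Proof. by elim. Qed.

Lemma reach_exec v e s v2 e2 s2 m fuel o y m' b' :
  reach v e s v2 e2 s2 m ->
  exec deg nbr ent col (AorB_robot d1) fuel v2 e2 s2 = Some (o, y, m', b') ->
  b' <= Bnd ->
  exists b, exec deg nbr ent col (AorB_robot d1) (m + fuel) v e s = Some (o, y, m + m', b)
            /\ b <= Bnd.
Proof.
elim=> [v0 e0 s0 _ h hb| v0 e0 s0 p s' v3 e3 s3 m0 hs hp hg _ ih h hb].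
  by exists b'.
have [b [he hb2]] := ih h hb.
exists (maxn (rbits (R := AorB_robot d1) s0) b); split.
  rewrite addSn /=. rewrite /step /ob in hs. rewrite hs hp he //.
by rewrite geq_max hb2 good_bits.
Qed.

Definition ports u (ex : option nat) from :=
  [seq p <- iota from (deg u - from) | Some p != ex].

Lemma ports_nil u ex from : deg u <= from -> ports u ex from = [::].
Proof. by rewrite /ports -subn_eq0 => /eqP ->. Qed.

Lemma ports_cons u ex from : from < deg u ->
  ports u ex from = if Some from != ex then from :: ports u ex from.+1
                    else ports u ex from.+1.
Proof.
move=> h; rewrite /ports -(subnSK h) /=. by case: ifP.
Qed.

Lemma mem_ports u ex p : (p \in ports u ex 0) = (p < deg u) && (Some p != ex).
Proof. by rewrite /ports mem_filter mem_iota subn0 add0n andbC. Qed.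

Fixpoint iarr (j : nat) (u : V) (e : nat) : bool :=
  col u || (if j is j'.+1 then has (fun p => iarr j' (nbr u p) (ent u p)) (ports u (Some e) 0)
            else false).

Fixpoint Acost j := if j is j'.+1 then 1 + Dl * (1 + Acost j') else 1.

Definition inner_fin (s : ABst) : act ABst cls :=
  match ab_ist s with
  | [::] => outer_return (ABSt 1 (ab_found s || ~~ ab_blk s) (ab_blk s) (ab_ost s) (ab_ist s))
  | _ => inner_return s
  end.

Lemma inner_iter_fin d s from : d <= from -> inner_iter d s from = inner_fin s.
Proof.
move=> h; rewrite /inner_iter /first_out.
have -> : ((if ohead (ab_ist s) == Some from then from.+1 else from) < d) = false.
  by case: ifP => _; apply/negbTE; rewrite -leqNgt // ltnW.
by case: s.
Qed.

Definition Pin j := forall u e f blk ost ist, e < deg u -> size ist + j.+1 = d1.-1 ->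
  size ost <= d1 -> all (fun p => p < Dl) ost -> all (fun p => p < Dl) ist ->
  exists m, reach u (Some e) (ABSt 2 f blk ost ist) (nbr u e) (Some (ent u e))
                  (ABSt 3 f (blk || iarr j u e) ost ist) m /\ m <= Acost j.

Lemma inner_loop j : Pin j -> forall u ost ist,
  size ist + j.+1 = d1.-1 -> size ost <= d1 -> all (fun p => p < Dl) ost ->
  all (fun p => p < Dl) ist ->
  forall n from md f blk s0 eo, deg u - from = n -> good s0 ->
  step s0 (ob u eo) = inner_iter (deg u) (ABSt md f blk ost ist) from ->
  exists md' eo' s0' m, reach u eo s0 u eo' s0' m /\
    step s0' (ob u eo') = inner_fin (ABSt md' f
          (blk || has (fun p => iarr j (nbr u p) (ent u p)) (ports u (ohead ist) from)) ost ist)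
    /\ m <= (deg u - from) * (1 + Acost j).
Proof.
move=> HP u ost ist hs hso hao hai; elim=> [|n ih] from md f blk s0 eo hn hg hst.
  have hf : deg u <= from by rewrite -subn_eq0 hn.
  exists md, eo, s0, 0; split; first exact: R0.
  by rewrite ports_nil // orbF hst inner_iter_fin.
have hf : from < deg u by rewrite -subn_gt0 hn.
have hn' : deg u - from.+1 = n by rewrite subnS hn.
rewrite (ports_cons (ohead ist) hf).
case: (eqVneq (ohead ist) (Some from)) => hex.
  rewrite /=.
  have hst' : step s0 (ob u eo) = inner_iter (deg u) (ABSt md f blk ost ist) from.+1.
    rewrite hst /inner_iter /first_out /= hex eqxx.
    have -> : (Some from == Some from.+1) = false by apply/eqP => -[]; lia.
    done.
  have [md' [eo' [s0' [m [h1 [h2 h3]]]]]] := ih _ md f blk s0 eo hn' hg hst'.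
  exists md', eo', s0', m; split => //; split; first by [].
  apply: leq_trans h3 _; rewrite leq_mul2r; apply/orP; right; exact: leq_sub2l.
rewrite /=.
have hst' : step s0 (ob u eo) = AMove from (ABSt 2 f blk ost ist).
  by rewrite hst /inner_iter /first_out /= (negbTE hex) hf.
have hpg := PG hf; case: hpg => he1 he2 he3.
have [m1 [hr1 hm1]] := HP (nbr u from) (ent u from) f blk ost ist he1 hs hso hao hai.
rewrite he2 he3 in hr1.
have hg3 : good (ABSt 3 f (blk || iarr j (nbr u from) (ent u from)) ost ist).
  by move: (reach_good hr1); rewrite /good /=.
have hst2 : step (ABSt 3 f (blk || iarr j (nbr u from) (ent u from)) ost ist) (ob u (Some from))
   = inner_iter (deg u) (ABSt 3 f (blk || iarr j (nbr u from) (ent u from)) ost ist) from.+1.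
  by [].
have [md' [eo' [s0' [m [h1 [h2 h3]]]]]] := ih _ _ _ _ _ _ hn' hg3 hst2.
exists md', eo', s0', (m1 + m).+1; split.
  apply: RS hst' hf hg _. exact: reach_trans hr1 h1.
split; first by rewrite h2 orbA.
rewrite hn' in h3; rewrite hn mulSn; lia.
Qed.

Lemma Pin_all j : Pin j.
Proof.
elim: j => [|j ih] u e f blk ost ist he hs hso hao hai.
- have hD : e < Dl := leq_trans he (Hdeg u).
  have hg : good (ABSt 2 f blk ost ist).
    by rewrite /good /= hso hao hai; move: hs; rewrite /=; lia.
  have hg' : good (ABSt 3 f (blk || iarr 0 u e) ost ist).
    by move: hg; rewrite /good.
  exists 1; split => //.
  apply: (RS (p := e) (s' := ABSt 3 f (blk || iarr 0 u e) ost ist)) => //; last exact: R0.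
  rewrite /step /ob /= /inner_return /=.
  rewrite /ab_step /=.
  have -> : (size ist).+1 == d1.-1 by apply/eqP; lia.
  by case: (col u); rewrite /= ?orbT ?orbF.
- have hD : e < Dl := leq_trans he (Hdeg u).
  have hg : good (ABSt 2 f blk ost ist).
    by rewrite /good /= hso hao hai; move: hs; rewrite /=; lia.
  case hc: (col u).
    exists 1; split; last by rewrite /=; lia.
    apply: (RS (p := e) (s' := ABSt 3 f true ost ist)) => //.
      by rewrite /step /ob /ab_step /= hc.
    by rewrite /= hc orbT; apply: R0; move: hg; rewrite /good.
  have hs' : size (e :: ist) + j.+1 = d1.-1 by rewrite /=; lia.
  have hai' : all (fun p => p < Dl) (e :: ist) by rewrite /= hD hai.
  have hst : step (ABSt 2 f blk ost ist) (ob u (Some e)) =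
      inner_iter (deg u) (ABSt 2 f blk ost (e :: ist)) 0.
    rewrite /step /ob /ab_step /= hc.
    have -> : ((size ist).+1 == d1.-1) = false by apply/eqP; lia.
    done.
  have [md' [eo' [s0' [m [h1 [h2 h3]]]]]] :=
    inner_loop ih hs' hso hao hai' (erefl _) hg hst.
  exists (m.+1); split.
    have hg1 := reach_good2 h1.
    rewrite -[m.+1]addn1; apply: reach_trans h1 _.
    have -> : (blk || iarr j.+1 u e) = (blk || has (fun p => iarr j (nbr u p) (ent u p)) (ports u (Some e) 0)).
      by rewrite /= hc.
    apply: (RS (p := e) (s' := ABSt 3 f (blk || has (fun p => iarr j (nbr u p) (ent u p)) (ports u (Some e) 0)) ost ist)).
    + by rewrite h2.
    + done.
    + done.
    + apply: R0; by move: hg; rewrite /good.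
  rewrite /= subn0 in h3 *.
  have : deg u * (1 + Acost j) <= Dl * (1 + Acost j) by rewrite leq_mul2r Hdeg orbT.
  lia.
Qed.

Definition iroot w := has (fun p => iarr d1.-2 (nbr w p) (ent w p)) (ports w None 0).

Lemma inner_root w f ost s0 eo : size ost <= d1 -> all (fun p => p < Dl) ost -> good s0 ->
  step s0 (ob w eo) = inner_iter (deg w) (ABSt 3 f false ost [::]) 0 ->
  exists eo' s0' m, reach w eo s0 w eo' s0' m /\
    step s0' (ob w eo') = outer_return (ABSt 1 (f || ~~ iroot w) (iroot w) ost [::]) /\
    m <= Dl * (1 + Acost d1.-2).
Proof.
move=> hso hao hg hst.
have hs : size (@nil nat) + (d1.-2).+1 = d1.-1 by rewrite /=; lia.
have HP : Pin d1.-2 by red; apply: Pin_all.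
have [md' [eo' [s0' [m [h1 [h2 h3]]]]]] :=
  inner_loop HP hs hso hao (erefl true) (erefl _) hg hst.
exists eo', s0', m; split => //; split; first by rewrite h2.
apply: leq_trans h3 _; rewrite subn0 leq_mul2r Hdeg orbT //.
Qed.

Fixpoint ofound (j : nat) (v : V) (e : nat) : bool :=
  ~~ col v && (if j is j'.+1 then has (fun p => ofound j' (nbr v p) (ent v p)) (ports v (Some e) 0)
               else ~~ iroot v).

Fixpoint Ocost j := if j is j'.+1 then 1 + Dl * (1 + Ocost j') else 1 + Dl * (1 + Acost d1.-2).

Lemma outer_iter_fin d s from : d <= from -> outer_iter d s from = outer_return s.
Proof.
move=> h; rewrite /outer_iter /first_out.
have -> : ((if ohead (ab_ost s) == Some from then from.+1 else from) < d) = false.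
  by case: ifP => _; apply/negbTE; rewrite -leqNgt // ltnW.
by [].
Qed.

Definition Pout j := forall v e f blk ost, e < deg v -> size ost + j.+1 = d1 ->
  all (fun p => p < Dl) ost ->
  exists blk' m, reach v (Some e) (ABSt 0 f blk ost [::]) (nbr v e) (Some (ent v e))
                  (ABSt 1 (f || ofound j v e) blk' ost [::]) m /\ m <= Ocost j.

Lemma outer_loop j : Pout j -> forall v ost,
  size ost + j.+1 = d1 -> all (fun p => p < Dl) ost ->
  forall n from md f blk s0 eo, deg v - from = n -> good s0 ->
  step s0 (ob v eo) = outer_iter (deg v) (ABSt md f blk ost [::]) from ->
  exists md' blk' eo' s0' m, reach v eo s0 v eo' s0' m /\
    step s0' (ob v eo') = outer_return (ABSt md'
          (f || has (fun p => ofound j (nbr v p) (ent v p)) (ports v (ohead ost) from)) blk' ost [::])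
    /\ m <= (deg v - from) * (1 + Ocost j).
Proof.
move=> HP v ost hs hao; elim=> [|n ih] from md f blk s0 eo hn hg hst.
  have hf : deg v <= from by rewrite -subn_eq0 hn.
  exists md, blk, eo, s0, 0; split; first exact: R0.
  by rewrite ports_nil // orbF hst outer_iter_fin.
have hf : from < deg v by rewrite -subn_gt0 hn.
have hn' : deg v - from.+1 = n by rewrite subnS hn.
rewrite (ports_cons (ohead ost) hf).
case: (eqVneq (ohead ost) (Some from)) => hex.
  rewrite /=.
  have hst' : step s0 (ob v eo) = outer_iter (deg v) (ABSt md f blk ost [::]) from.+1.
    rewrite hst /outer_iter /first_out /= hex eqxx.
    have -> : (Some from == Some from.+1) = false by apply/eqP => -[]; lia.
    done.
  have [md' [blk' [eo' [s0' [m [h1 [h2 h3]]]]]]] := ih _ md f blk s0 eo hn' hg hst'.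
  exists md', blk', eo', s0', m; split => //; split; first by [].
  apply: leq_trans h3 _; rewrite leq_mul2r; apply/orP; right; exact: leq_sub2l.
rewrite /=.
have hst' : step s0 (ob v eo) = AMove from (ABSt 0 f blk ost [::]).
  by rewrite hst /outer_iter /first_out /= (negbTE hex) hf.
have hpg := PG hf; case: hpg => he1 he2 he3.
have [blk1 [m1 [hr1 hm1]]] := HP (nbr v from) (ent v from) f blk ost he1 hs hao.
rewrite he2 he3 in hr1.
have hg3 := reach_good2 hr1.
have hst2 : step (ABSt 1 (f || ofound j (nbr v from) (ent v from)) blk1 ost [::]) (ob v (Some from))
   = outer_iter (deg v) (ABSt 1 (f || ofound j (nbr v from) (ent v from)) blk1 ost [::]) from.+1.
  by [].
have [md' [blk' [eo' [s0' [m [h1 [h2 h3]]]]]]] := ih _ _ _ _ _ _ hn' hg3 hst2.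
exists md', blk', eo', s0', (m1 + m).+1; split.
  apply: RS hst' hf hg _. exact: reach_trans hr1 h1.
split; first by rewrite h2 orbA.
rewrite hn' in h3; rewrite hn mulSn; lia.
Qed.

Lemma Pout_all j : Pout j.
Proof.
elim: j => [|j ih] v e f blk ost he hs hao.
- have hD : e < Dl := leq_trans he (Hdeg v).
  have hg : good (ABSt 0 f blk ost [::]) by rewrite /good /= hao; lia.
  have hao' : all (fun p => p < Dl) (e :: ost) by rewrite /= hD hao.
  case hc: (~~ col v && ~~ f).
    have hst : step (ABSt 0 f blk ost [::]) (ob v (Some e)) =
        inner_iter (deg v) (ABSt 3 f false (e :: ost) [::]) 0.
      rewrite /step /ob /ab_step /=.
      have -> : (size ost).+1 == d1 by apply/eqP; lia.
      by rewrite hc.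
    have hso' : size (e :: ost) <= d1 by rewrite /=; lia.
    have [eo' [s0' [m [h1 [h2 h3]]]]] := inner_root hso' hao' hg hst.
    move/andP: hc => [hc1 hc2].
    exists (iroot v), m.+1; split.
      have hg1 := reach_good2 h1.
      rewrite -[m.+1]addn1; apply: reach_trans h1 _.
      apply: (RS (p := e) (s' := ABSt 1 (f || ~~ iroot v) (iroot v) ost [::])).
      + by rewrite h2.
      + done.
      + done.
      + rewrite /= hc1 /=; apply: R0; rewrite /good /= hao; lia.
    by rewrite /=; lia.
  have hst : step (ABSt 0 f blk ost [::]) (ob v (Some e)) = AMove e (ABSt 1 f blk ost [::]).
    rewrite /step /ob /ab_step /=.
    have -> : (size ost).+1 == d1 by apply/eqP; lia.
    by rewrite hc.
  exists blk, 1; split; last by rewrite /=; lia.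
  apply: RS hst he hg _.
  have -> : f || ofound 0 v e = f.
    by move: hc; rewrite /=; case: (col v); case: f.
  by apply: R0; rewrite /good /= hao; lia.
- have hD : e < Dl := leq_trans he (Hdeg v).
  have hg : good (ABSt 0 f blk ost [::]) by rewrite /good /= hao; lia.
  have hao' : all (fun p => p < Dl) (e :: ost) by rewrite /= hD hao.
  case hc: (col v).
    have hst : step (ABSt 0 f blk ost [::]) (ob v (Some e)) = AMove e (ABSt 1 f blk ost [::]).
      rewrite /step /ob /ab_step /=.
      have -> : ((size ost).+1 == d1) = false by apply/eqP; lia.
      by rewrite hc.
    exists blk, 1; split; last by rewrite /=; lia.
    apply: RS hst he hg _.
    rewrite /= hc /= orbF.
    by apply: R0; rewrite /good /= hao; lia.
  have hst : step (ABSt 0 f blk ost [::]) (ob v (Some e)) =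
      outer_iter (deg v) (ABSt 0 f blk (e :: ost) [::]) 0.
    rewrite /step /ob /ab_step /=.
    have -> : ((size ost).+1 == d1) = false by apply/eqP; lia.
    by rewrite hc.
  have hs' : size (e :: ost) + j.+1 = d1 by rewrite /=; lia.
  have [md' [blk' [eo' [s0' [m [h1 [h2 h3]]]]]]] :=
    outer_loop ih hs' hao' (erefl _) hg hst.
  exists blk', m.+1; split.
    have hg1 := reach_good2 h1.
    rewrite -[m.+1]addn1; apply: reach_trans h1 _.
    apply: (RS (p := e) (s' := ABSt 1 (f || ofound j.+1 v e) blk' ost [::])).
    + by rewrite h2 /= hc.
    + done.
    + done.
    + by apply: R0; rewrite /good /= hao; lia.
  rewrite /= subn0 in h3 *.
  have : deg v * (1 + Ocost j) <= Dl * (1 + Ocost j) by rewrite leq_mul2r Hdeg orbT.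
  lia.
Qed.

Lemma root_run x : exists m b,
  exec deg nbr ent col (AorB_robot d1) (m.+1) x None (rinit (AorB_robot d1))
  = Some (if has (fun p => ofound d1.-1 (nbr x p) (ent x p)) (ports x None 0) then ClsA else ClsB,
          x, m, b) /\ b <= Bnd /\ m <= Dl * (1 + Ocost d1.-1).
Proof.
have hg : good (ABSt 0 false false [::] [::]) by rewrite /good /=; lia.
have hst : step (ABSt 0 false false [::] [::]) (ob x None) =
    outer_iter (deg x) (ABSt 0 false false [::] [::]) 0.
  rewrite /step /ob /ab_step /=.
  have -> : (0 == d1) = false by apply/eqP; lia.
  by [].
have hs : size (@nil nat) + (d1.-1).+1 = d1 by rewrite /=; lia.
have HP : Pout d1.-1 by red; apply: Pout_all.
have [md' [blk' [eo' [s0' [m [h1 [h2 h3]]]]]]] :=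
  outer_loop HP hs (erefl true) (erefl _) hg hst.
have hg1 := reach_good2 h1.
have he : exec deg nbr ent col (AorB_robot d1) 1 x eo' s0' =
   Some (if has (fun p => ofound d1.-1 (nbr x p) (ent x p)) (ports x None 0) then ClsA else ClsB,
          x, 0, rbits (R := AorB_robot d1) s0').
  rewrite /=. rewrite /step /ob in h2. by rewrite h2.
have [b [hb1 hb2]] := reach_exec h1 he (good_bits hg1).
exists m, b; split; first by rewrite addn1 addn0 in hb1.
split => //; rewrite subn0 in h3; apply: leq_trans h3 _.
by rewrite leq_mul2r Hdeg orbT.
Qed.
End Exec.
Section Graph.
Variables (V : finType) (deg : V -> nat) (nbr : V -> nat -> V) (ent : V -> nat -> nat).
Hypothesis PG : port_graph deg nbr ent.
Hypothesis conn : connected deg nbr.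
Variable r : V.

Local Notation lev v := (dist deg nbr r v).

Lemma ballS k u : (u \in ball deg nbr k.+1 r) =
  (u \in ball deg nbr k r) || [exists v in ball deg nbr k r, adj deg nbr v u].
Proof. by rewrite /= inE inE. Qed.

Lemma path_ball x p k : path (adj deg nbr) x p -> x \in ball deg nbr k r ->
  last x p \in ball deg nbr (k + size p) r.
Proof.
elim: p x k => [|y p ih] x k /=; first by rewrite addn0.
move=> /andP [hxy hp] hx; rewrite addnS -addSn; apply: ih => //.
by rewrite ballS; apply/orP; right; apply/existsP; exists x; rewrite hx.
Qed.

Lemma ball_lev u : u \in ball deg nbr (lev u) r.
Proof.
have := conn r u => /connectP [p hp hu].
rewrite hu; case: (shortenP hp) => p' hp' hu' _.
have hsz : size p' < #|V|.
  have := max_card (mem (r :: p')); rewrite (card_uniqP hu') /=; lia.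
have hb : last r p' \in ball deg nbr (size p') r.
  by rewrite -[size p']add0n; apply: path_ball => //=; rewrite inE.
have hh : has (fun k => last r p' \in ball deg nbr k r) (iota 0 #|V|).
  by apply/hasP; exists (size p'); rewrite // mem_iota.
have hf : find (fun k => last r p' \in ball deg nbr k r) (iota 0 #|V|) < #|V|.
  by move: hh; rewrite has_find size_iota.
by have := nth_find 0 hh; rewrite /dist nth_iota // add0n.
Qed.

Lemma lev_le u k : u \in ball deg nbr k r -> lev u <= k.
Proof.
move=> hu; case: (ltnP k #|V|) => hk.
  rewrite leqNgt; apply/negP => hlt.
  by have := before_find 0 hlt; rewrite nth_iota // add0n hu.

apply: leq_trans hk; rewrite /dist; apply: leq_trans (find_size _ _) _.
by rewrite size_iota.
Qed.

Lemma lev_nbr u p : p < deg u -> lev (nbr u p) <= (lev u).+1.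
Proof.
move=> hp; apply: lev_le; rewrite ballS; apply/orP; right.
apply/existsP; exists u; rewrite ball_lev /=.
by apply/existsP; exists (Ordinal hp).
Qed.

Lemma lev_nbr' u p : p < deg u -> lev u <= (lev (nbr u p)).+1.
Proof.
move=> hp; case: (PG hp) => h1 h2 _.
by have := lev_nbr h1; rewrite h2.
Qed.

Lemma lev_parent u : 0 < lev u -> exists2 p, p < deg u & lev (nbr u p) = (lev u).-1.
Proof.
move=> hpos; have := ball_lev u.
case hl: (lev u) hpos => [|n] // _; rewrite ballS => /orP [h|].
  by have := lev_le h; rewrite hl ltnn.
move=> /existsP [v /andP [hv /existsP [q /eqP hq]]].
case: (PG (ltn_ord q)) => h1 h2 _.
rewrite hq in h1 h2.
exists (ent v q) => //; rewrite h2.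
have := lev_le hv; have := lev_nbr' h1; rewrite h2 hl /=; lia.
Qed.
End Graph.

Section Correct.
Variables (V : finType) (deg : V -> nat) (nbr : V -> nat -> V) (ent : V -> nat -> nat).
Hypothesis PG : port_graph deg nbr ent.
Hypothesis conn : connected deg nbr.
Variables (r : V) (d1 d2 : nat).
Hypothesis Hd1 : 2 <= d1.
Hypothesis Hd12 : 2 * d1 <= d2.

Local Notation lev v := (dist deg nbr r v).
Local Notation col := (AL_black deg nbr r d1 d2).
Local Notation q := (d1 + d2 + 2).

Lemma col_lev v k i : lev v = k * q + i -> i < q ->
  col v = [|| i == d2 + 1, i == d1 + d2 + 1, i == 0 | i == 1].
Proof.
move=> hl hi; rewrite /AL_black /inA /inB /inC /inD /ALq hl modnMDl modn_small //.
Qed.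

Lemma iarr_white lo hi : (forall y, lo <= lev y <= hi -> col y = false) ->
  forall j u e, lo + j <= lev u -> lev u + j <= hi -> iarr deg nbr ent col j u e = false.
Proof.
move=> H; elim=> [|j ih] u e h1 h2 /=.
  by rewrite H //; apply/andP; split; lia.
rewrite H; last by apply/andP; split; lia.
apply/hasPn => p; rewrite mem_ports => /andP [hp _].
have := lev_nbr conn r hp; have := lev_nbr' PG conn r hp => ha hb.
apply/negbT; apply: ih; lia.
Qed.

Lemma iarr_down a : (forall z, lev z = a -> col z) ->
  forall j t u e, t <= j -> lev u = a + t ->
  (0 < t -> e < deg u /\ lev (nbr u e) = (lev u).+1) -> iarr deg nbr ent col j u e.
Proof.
move=> Ha; elim=> [|j ih] t u e ht hl hc /=.
  by rewrite Ha //; lia.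
case: t ht hl hc => [|t] ht hl hc.
  by rewrite Ha //; lia.
have [he hle] := hc erefl.
have [p hp hlp] := lev_parent PG conn (r := r) (u := u) (ltac:(lia)).
apply/orP; right; apply/hasP; exists p.
  rewrite mem_ports hp /=; apply/eqP => -[hpe]; move: hle; rewrite -hpe hlp; lia.
case: (PG hp) => h1 h2 h3.
apply: (ih t) => //; first lia.
move=> _; split => //; rewrite h2; lia.
Qed.

Lemma iroot_band k w : k * q + d2 + 2 <= lev w <= k * q + d1 + d2 ->
  iroot deg nbr ent col d1 w.
Proof.
move=> /andP [hw1 hw2].
have [p hp hlp] := lev_parent PG conn (r := r) (u := w) (ltac:(lia)).
rewrite /iroot; apply/hasP; exists p; first by rewrite mem_ports hp.
case: (PG hp) => h1 h2 _.
apply: (@iarr_down (k * q + d2 + 1) _ _ (lev w - 1 - (k * q + d2 + 1))).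
- move=> z hz; rewrite (@col_lev z k (d2 + 1)); [by rewrite eqxx | lia | lia].
- lia.
- lia.
- by move=> _; split => //; rewrite h2; lia.
Qed.

Lemma ofound_band k : forall j v e,
  col v || (k * q + d2 + 2 <= lev v <= k * q + d1 + d2) ->
  ofound deg nbr ent col d1 j v e = false.
Proof.
elim=> [|j ih] v e /=; case hc: (col v) => //= hb.
  by rewrite (iroot_band hb).
apply/hasPn => p; rewrite mem_ports => /andP [hp _].
have := lev_nbr conn r hp; have := lev_nbr' PG conn r hp => ha hb'.
apply/negbT; apply: ih.
have [hlo|hlo] := ltnP (lev (nbr v p)) (k * q + d2 + 2).
  apply/orP; left; rewrite (@col_lev _ k (d2 + 1)); [by rewrite eqxx | lia | lia].
have [hhi|hhi] := leqP (lev (nbr v p)) (k * q + d1 + d2).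
  by apply/orP; right; apply/andP; split.
apply/orP; left; rewrite (@col_lev _ k (d1 + d2 + 1)); [by rewrite eqxx orbT | lia | lia].
Qed.

Lemma root_B k x : lev x = k * q + (d1 + d2 + 1) ->
  has (fun p => ofound deg nbr ent col d1 d1.-1 (nbr x p) (ent x p)) (ports deg x None 0) = false.
Proof.
move=> hx; apply/hasPn => p; rewrite mem_ports => /andP [hp _].
have := lev_nbr conn r hp; have := lev_nbr' PG conn r hp => ha hb'.
apply/negbT; apply: (ofound_band (k := k)).
have [hlo|hlo] := ltnP (lev (nbr x p)) (lev x).
  by apply/orP; right; apply/andP; split; lia.
have [hhi|hhi] := leqP (lev (nbr x p)) (lev x).
  apply/orP; left; rewrite (@col_lev _ k (d1 + d2 + 1)); [by rewrite eqxx orbT | lia | lia].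
apply/orP; left; rewrite (@col_lev _ k.+1 0); [by rewrite eqxx !orbT | | lia].
rewrite mulSn; lia.
Qed.

Lemma white_A k y : k * q + 2 <= lev y <= k * q + d2 -> col y = false.
Proof.
move=> /andP [h1 h2].
rewrite (@col_lev y k (lev y - k * q)); [| lia | lia].
apply/negbTE; rewrite !negb_or; apply/and4P; split; apply/eqP; lia.
Qed.

Lemma ofound_chain k : forall j v e, j <= d1.-1 ->
  lev v = k * q + d2 + 1 - d1 + j -> e < deg v -> lev (nbr v e) = (lev v).+1 ->
  ofound deg nbr ent col d1 j v e.
Proof.
have HW : forall y, k * q + 2 <= lev y <= k * q + d2 -> col y = false.
  by move=> y; apply: white_A.
elim=> [|j ih] v e hj hl he hle /=.
  rewrite (white_A (k := k)); last by apply/andP; split; lia.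
  rewrite /iroot /=; apply/negP => /hasP [p].
  rewrite mem_ports => /andP [hp _].
  have := lev_nbr conn r hp; have := lev_nbr' PG conn r hp => ha hb.
  by rewrite (iarr_white HW) //; lia.
rewrite (white_A (k := k)) /=; last by apply/andP; split; lia.
have [p hp hlp] := lev_parent PG conn (r := r) (u := v) (ltac:(lia)).
apply/hasP; exists p.
  rewrite mem_ports hp /=; apply/eqP => -[hpe]; move: hle; rewrite -hpe hlp; lia.
case: (PG hp) => h1 h2 _.
apply: ih => //; [lia | lia | rewrite h2; lia].
Qed.

Lemma root_A k x : lev x = k * q + (d2 + 1) ->
  has (fun p => ofound deg nbr ent col d1 d1.-1 (nbr x p) (ent x p)) (ports deg x None 0).
Proof.
move=> hx.
have [p hp hlp] := lev_parent PG conn (r := r) (u := x) (ltac:(lia)).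
apply/hasP; exists p; first by rewrite mem_ports hp.
case: (PG hp) => h1 h2 _.
apply: (ofound_chain (k := k)); [lia | lia | done | rewrite h2; lia].
Qed.

Lemma root_correct x : inA deg nbr r d1 d2 x || inB deg nbr r d1 d2 x ->
  has (fun p => ofound deg nbr ent col d1 d1.-1 (nbr x p) (ent x p)) (ports deg x None 0)
  = ~~ inB deg nbr r d1 d2 x.
Proof.
have hq := divn_eq (lev x) q.
rewrite /inA /inB /ALq.
case hB: (lev x %% q == d1 + d2 + 1) => /=.
  rewrite orbT => _; apply: (root_B (k := lev x %/ q)).
  by rewrite {1}hq (eqP hB).
rewrite orbF => /eqP hA.
apply: (root_A (k := lev x %/ q)).
by rewrite {1}hq hA.
Qed.
End Correct.

Lemma Acost_bound Dl j : 2 <= Dl -> Acost Dl j + 3 <= 4 * Dl ^ j.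
Proof.
move=> hD; elim: j => [|j ih] /=; first by rewrite expn0.
rewrite expnS; set P := Dl ^ j in ih *.
have : Dl * (1 + Acost Dl j) + Dl * 2 <= Dl * (4 * P).
  rewrite -mulnDr leq_mul2l; apply/orP; right; lia.
lia.
Qed.

Lemma Ocost_bound d1 Dl j : 2 <= Dl ->
  Ocost d1 Dl j + 3 <= (Dl * (1 + Acost Dl d1.-2) + 4) * Dl ^ j.
Proof.
move=> hD; elim: j => [|j ih] /=; first by rewrite expn0 muln1; lia.
rewrite expnS; set P := Dl ^ j in ih *; set K := Dl * _ + 4 in ih *.
have : Dl * (1 + Ocost d1 Dl j) + Dl * 2 <= Dl * (K * P).
  rewrite -mulnDr leq_mul2l; apply/orP; right; lia.
rewrite mulnCA; lia.
Qed.

Lemma total_bound d1 Dl : 2 <= Dl -> 2 <= d1 ->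
  Dl * (1 + Ocost d1 Dl d1.-1) <= 4 * Dl ^ (2 * d1 - 1).
Proof.
move=> hD h1.
have hA := Acost_bound d1.-2 hD.
have hO := Ocost_bound d1 d1.-1 hD.
set A := Acost Dl d1.-2 in hA hO; set O := Ocost d1 Dl d1.-1 in hO *.
have e1 : Dl ^ (2 * d1 - 1) = Dl ^ d1.-1 * Dl ^ d1 by rewrite -expnD; congr (_ ^ _); lia.
have e2 : Dl ^ d1.-1 = Dl * Dl ^ d1.-2 by rewrite -expnS; congr (_ ^ _); lia.
have e3 : Dl ^ d1 = Dl * Dl ^ d1.-1 by rewrite -expnS; congr (_ ^ _); lia.
set P2 := Dl ^ d1.-2 in hA e2; set P1 := Dl ^ d1.-1 in hO e1 e2 e3.
rewrite e1 e3.
have hK : Dl * (1 + A) + 4 <= 4 * P1.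
  rewrite e2; have : Dl * (1 + A) + Dl * 2 <= Dl * (4 * P2).
    rewrite -mulnDr leq_mul2l; apply/orP; right; lia.
  lia.
have h1' : Dl * (1 + O) + Dl * 2 <= Dl * ((Dl * (1 + A) + 4) * P1).
  rewrite -mulnDr leq_mul2l; apply/orP; right; lia.
have h2' : Dl * ((Dl * (1 + A) + 4) * P1) <= Dl * ((4 * P1) * P1).
  by rewrite leq_mul2l leq_mul2r hK !orbT.
rewrite mulnA [4 * P1 * _]mulnC -mulnA mulnCA in h2'.
move: h2'; rewrite [Dl * (P1 * (4 * P1))]mulnC -!mulnA.
lia.
Qed.

Lemma exists_lev (V : finType) (deg : V -> nat) (nbr : V -> nat -> V) (ent : V -> nat -> nat)
  (PG : port_graph deg nbr ent) (conn : connected deg nbr) (r : V) :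
  forall t u n, dist deg nbr r u = n + t -> exists z, dist deg nbr r z = n.
Proof.
elim=> [|t ih] u n hu; first by exists u; rewrite hu addn0.
have [p hp hlp] := lev_parent PG conn (r := r) (u := u) (ltac:(lia)).
apply: (ih (nbr u p)); rewrite hlp hu; lia.
Qed.

Lemma maxdeg_ge2 (V : finType) (deg : V -> nat) (nbr : V -> nat -> V) (ent : V -> nat -> nat)
  (PG : port_graph deg nbr ent) (conn : connected deg nbr) (r x : V) :
  2 <= dist deg nbr r x -> 2 <= maxdeg deg.
Proof.
move=> hx.
have [y2 hy2] : exists z, dist deg nbr r z = 2.
  by apply: (exists_lev PG conn (r := r) (t := dist deg nbr r x - 2) (u := x)); lia.
have [p2 hp2 hl2] := lev_parent PG conn (r := r) (u := y2) (ltac:(lia)).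
set y1 := nbr y2 p2 in hl2.
have [p1 hp1 hl1] := lev_parent PG conn (r := r) (u := y1) (ltac:(lia)).
case: (PG y2 p2 hp2) => h1 h2 _.
have hne : p1 != ent y2 p2.
  apply/eqP => hpe; move: hl1; rewrite hpe h2 hl2 hy2 //.
apply: leq_trans (leq_bigmax y1).
have : p1 < deg y1 by [].
have : ent y2 p2 < deg y1 by [].
move: hne; case: (ltngtP p1 (ent y2 p2)) => //; lia.
Qed.

Theorem lemma4 :
  exists c1 c2 : nat,
  forall (V : finType) (deg : V -> nat) (nbr : V -> nat -> V)
         (ent : V -> nat -> nat),
    port_graph deg nbr ent ->
    connected deg nbr ->
  forall (r : V) (d1 d2 : nat),
    2 <= d1 ->
    d1 <= d2./2 ->
    d1 + d2 + 1 <= diam deg nbr ->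
  forall x : V,
    inA deg nbr r d1 d2 x || inB deg nbr r d1 d2 x ->
    exists fuel m b : nat,
      exec deg nbr ent (AL_black deg nbr r d1 d2) (AorB_robot d1)
           fuel x None (rinit (AorB_robot d1))
      = Some (if inB deg nbr r d1 d2 x then ClsB else ClsA, x, m, b)
      /\ b <= c1 * d1 * trunc_log 2 (maxdeg deg)
      /\ m <= c2 * (maxdeg deg) ^ (2 * d1 - 1).
Proof.
exists 8, 4 => V deg nbr ent PG conn r d1 d2 hd1 hd12 _ x hx.
have Hd12 : 2 * d1 <= d2.
  have := odd_double_half d2; rewrite -addnn; lia.
have Hdeg : forall v, deg v <= maxdeg deg by move=> v; apply: leq_bigmax.
have hlx : 2 <= dist deg nbr r x.
  move: hx; rewrite /inA /inB /ALq => /orP [] /eqP h;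
  have := leq_mod (dist deg nbr r x) (d1 + d2 + 2); rewrite h; lia.
have hD := maxdeg_ge2 PG conn hlx.
have [m [b [he [hb hm]]]] := root_run PG (AL_black deg nbr r d1 d2) hd1 Hdeg x.
rewrite (root_correct PG conn hd1 Hd12 hx) in he.
exists m.+1, m, b; split.
  by rewrite he; case: (inB _ _ _ _ _ _).
split.
  apply: leq_trans hb _; rewrite /Bnd /bitlen.
  have hL : 1 <= trunc_log 2 (maxdeg deg).
    by rewrite trunc_log_gt0 /=.
  set L := trunc_log 2 _ in hL *.
  have hP : d1 <= d1 * L by rewrite -{1}[d1]muln1 leq_mul2l hL orbT.
  rewrite -mulnA; lia.
exact: leq_trans hm (total_bound hD hd1).
Qed.
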